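(* Let $q$ be a prime, $A$ a group of exponent $q$ and order $q^3$. Suppose $A$ acts by automorphisms on a finite group $G$ of order coprime to $q$ with $G=PH$, where $P$ and $H$ are $A$-invariant subgroups, $P$ is a normal $p$-subgroup of $G$ for a prime $p$, and $H$ is a nilpotent $p'$-subgroup. Let $N$ be a normal subgroup of $P$ that is invariant under both $H$ and $A$. Assume that $P=[P,H]$ and $|[N,H]|=p^n$. Then $N\le Z_{2n+1}(P)$.
   Context: $Z_i(P)$ denotes the $i$-th term of the upper central series of $P$; $[X,Y]$ is the subgroup generated by commutators of elements of $X$ and $Y$. *)

(* Defs.v *)
From mathcomp Require Import all_boot all_fingroup all_solvable.

(* Main.v *)
Require Import Defs.
From mathcomp Require Import all_boot all_fingroup all_solvable.
Set Implicit Arguments.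
Unset Strict Implicit.
Unset Printing Implicit Defensive.
Local Open Scope group_scope.

Section Aux.
Variables (gT : finGroupType) (P H : {group gT}).
Hypotheses (nPH : H \subset 'N(P)) (PH : [~: P, H] = P).

Lemma auxF i (N : {group gT}) : N \subset P -> P \subset 'N(N) ->
  H \subset 'N(N) -> [~: N, H] \subset 'Z_i(P) -> N \subset 'Z_i.+1(P).
Proof.
move=> sNP nNP nNH sKZ.
set Z := 'Z_i(P).
have nZP : P \subset 'N(Z) := ucn_norm i P.
have nZH : H \subset 'N(Z) := char_norm_trans (ucn_char i P) nPH.
have nZN : N \subset 'N(Z) := subset_trans sNP nZP.
have nPHZ : [~: P, H] \subset 'N(Z) by rewrite PH.
have key : [~: P, H, N] \subset Z.
  rewrite -quotient_sub1; last first.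
    by rewrite PH; apply: subset_trans nZP; apply: comm_subG.
  have sNPN : [~: N, P] \subset N by rewrite commg_subl.
  have h1 : [~: H / Z, N / Z, P / Z] = 1.
    by rewrite -(quotientR nZH nZN) (commGC H N) quotientS1 // comm1G.
  have h2 : [~: N / Z, P / Z, H / Z] = 1.
    rewrite -!quotientR //; last by apply: subset_trans nZN.
    apply: quotientS1; apply: subset_trans sKZ; exact: commSg.
  rewrite !quotientR // (@three_subgroup _ (H / Z)%G (N / Z)%G (P / Z)%G h1 h2).
  by [].
have hNP : [~: N, P] \subset Z by rewrite commGC -{1}PH.
rewrite ucnSnR; apply/subsetP => x Nx; rewrite inE (subsetP sNP) //=.
by apply: subset_trans hNP; apply: commSg; rewrite sub1set.
Qed.

Lemma auxG i (N : {group gT}) : nilpotent P -> N \subset P -> P \subset 'N(N) ->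
  N :&: 'Z_i.+1(P) \subset 'Z_i(P) -> N \subset 'Z_i(P).
Proof.
move=> nilP sNP nNP hN.
have [m Zm] := ucnP P nilP.
have claim t : N :&: 'Z_(i.+1 + t)(P) \subset 'Z_i(P).
  elim: t => [|t IH]; first by rewrite addn0.
  apply/subsetP => x /setIP[Nx]; rewrite addnS ucnSnR inE => /andP[Px cx].
  apply: (subsetP hN); rewrite inE Nx ucnSnR inE Px /=.
  apply: subset_trans IH; rewrite subsetI cx andbT.
  apply: subset_trans (commSg _ _) _; first by rewrite sub1set; exact: Nx.
  by rewrite commg_subl.
apply: subset_trans (claim m); rewrite subsetI subxx /=.
apply: subset_trans sNP _; rewrite -{1}Zm; apply: ucn_sub_geq.
by rewrite leq_addl.
Qed.

Lemma auxS i (N : {group gT}) : nilpotent P -> N \subset P -> P \subset 'N(N) ->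
  H \subset 'N(N) -> ~~ ([~: N, H] \subset 'Z_i(P)) ->
  ~~ ([~: N, H] :&: 'Z_i.+2(P) \subset 'Z_i(P)).
Proof.
move=> nilP sNP nNP nNH; apply: contra => hK.
set V := (N :&: 'Z_i.+2(P))%G.
have sVP : V \subset P by rewrite subIset // sNP.
have nVP : P \subset 'N(V) by rewrite normsI // ucn_norm.
have nVH : H \subset 'N(V).
  by rewrite normsI // (char_norm_trans (ucn_char _ P) nPH).
have sVHK : [~: V, H] \subset [~: N, H] :&: 'Z_i.+2(P).
  rewrite subsetI commSg ?subsetIl //=.
  by apply: subset_trans (subsetIr N _); rewrite commg_subl.
have sVZ := auxF sVP nVP nVH (subset_trans sVHK hK).
have sNZ : N \subset 'Z_i.+1(P) by apply: auxG.
have sNV : N \subset V.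
  by rewrite subsetI subxx /=; apply: subset_trans sNZ (ucn_subS _ _).
by apply: subset_trans hK; apply: subset_trans sVHK; apply: commSg.
Qed.

End Aux.

Lemma logn_proper (gT : finGroupType) p (A B : {group gT}) :
  prime p -> p.-group B -> A \proper B -> logn p #|A| < logn p #|B|.
Proof.
move=> pr pB pAB.
have pA : p.-group A := pgroupS (proper_sub pAB) pB.
have := proper_card pAB.
by rewrite {1}(card_pgroup pA) {1}(card_pgroup pB) ltn_exp2l ?prime_gt1.
Qed.

Theorem lemma2p8 (gT : finGroupType) (q p n : nat)
  (A G P H N : {group gT}) :
  prime q -> exponent A = q -> #|A| = (q ^ 3)%N ->
  A \subset 'N(G) -> coprime #|G| q ->
  P * H = G ->
  A \subset 'N(P) -> A \subset 'N(H) ->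
  prime p -> P <| G -> p.-group P ->
  nilpotent H -> p^'.-group H ->
  N <| P -> H \subset 'N(N) -> A \subset 'N(N) ->
  [~: P, H] = P -> #|[~: N, H]| = (p ^ n)%N ->
  N \subset 'Z_(2 * n + 1)(P).
Proof.
move=> _ _ _ _ _ defG _ _ prp nPG pP _ _ /andP[sNP nNP] nNH _ PH cK.
have sHG : H \subset G by rewrite -defG mulG_subr.
have nPH : H \subset 'N(P) := subset_trans sHG (normal_norm nPG).
have nilP := pgroup_nil pP.
set K := [~: N, H].
have sKP : K \subset P by apply: subset_trans sNP; rewrite commg_subl.
have pK : p.-group K := pgroupS sKP pP.
have count j : ~~ (K \subset 'Z_(2 * j)(P)) -> j <= logn p #|K :&: 'Z_(2 * j)(P)|.
  elim: j => [|j IH] // nK.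
  have nK' : ~~ (K \subset 'Z_(2 * j)(P)).
    apply: contra nK => h; apply: subset_trans h _; apply: ucn_sub_geq.
    by rewrite leq_mul2l ltnW.
  have := auxS nPH PH nilP sNP nNP nNH nK'.
  rewrite -addn2 -mulnSr => hS.
  apply: leq_ltn_trans (IH nK') _; apply: logn_proper => //.
    exact: pgroupS (subsetIl _ _) pK.
  rewrite properE; apply/andP; split.
    by rewrite setIS // ucn_sub_geq // leq_mul2l ltnW ?orbT.
  by apply: contra hS => h; apply: subset_trans h (subsetIr _ _).
have sKZ : K \subset 'Z_(2 * n)(P).
  apply/negPn/negP => nK.
  have := count n nK.
  have: logn p #|K :&: 'Z_(2 * n)(P)| < logn p #|K|.
    apply: logn_proper => //; rewrite properE subsetIl /=.
    by apply: contra nK => h; apply: subset_trans h (subsetIr _ _).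
  by rewrite cK pfactorK // => h1 h2; move: (leq_ltn_trans h2 h1); rewrite ltnn.
by rewrite addn1; apply: (auxF nPH PH).
Qed.
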